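(* Let $\mathcal{Q}\subset\mathbb{R}^2$ be a convex polygon and $Q\in\mathcal{Q}$ one of its vertices. Let $\delta>0$ and $\bar Q\in\mathbb{R}^2$ with $\|Q-\bar Q\|<\delta$. Suppose there is $r>0$ with $\|Q\|>r$ such that \[ \frac{\langle Q,Q-P_j\rangle}{\|Q\|\,\|Q-P_j\|}\ge\frac{\delta}{r} \] for all other vertices $P_j\in\mathcal{Q}\setminus\{Q\}$. Then $Q$ is $\delta$-locally maximally distant with respect to $\bar Q$.
   Context: A convex polygon is a finite set of points of $\mathbb{R}^2$, not all on one line, in convex position (its points are its vertices). For a vertex $Q$ of a convex polygon $\mathcal{Q}$ and $\bar Q\in\mathbb{R}^2$ with $\|Q-\bar Q\|<\delta$, $Q$ is called $\delta$-locally maximally distant with respect to $\bar Q$ if $\|Q\|>\|A\|$ for every $A$ in the intersection of the open disk of radius $\delta$ centered at $\bar Q$ with the interior of the convex hull of $\mathcal{Q}$. *)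

(* Defs.v *)
From mathcomp Require Import all_boot all_order all_algebra.
From mathcomp Require Import reals.
Set Implicit Arguments. Unset Strict Implicit. Unset Printing Implicit Defensive.
Import Order.TTheory GRing.Theory Num.Theory.
Local Open Scope ring_scope.

Section Plane.
Variable R : realType.

Definition pt := (R * R)%type.

Definition psub (p q : pt) : pt := (p.1 - q.1, p.2 - q.2).
Definition dot (p q : pt) : R := p.1 * q.1 + p.2 * q.2.
Definition enorm (p : pt) : R := Num.sqrt (dot p p).
Definition cross (p q : pt) : R := p.1 * q.2 - p.2 * q.1.

Definition in_conv_hull (s : seq pt) (x : pt) : Prop :=
  exists w : nat -> R,
    (forall i, (i < size s)%N -> 0 <= w i) /\
    \sum_(i < size s) w i = 1 /\
    x.1 = \sum_(i < size s) w i * (nth x s i).1 /\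
    x.2 = \sum_(i < size s) w i * (nth x s i).2.

Definition in_interior_conv_hull (s : seq pt) (x : pt) : Prop :=
  exists e : R, 0 < e /\ forall y : pt, enorm (psub y x) < e -> in_conv_hull s y.

Definition convex_polygon (s : seq pt) : Prop :=
  uniq s /\
  (exists a b c, [/\ a \in s, b \in s, c \in s & cross (psub b a) (psub c a) != 0]) /\
  (forall P, P \in s -> ~ in_conv_hull (rem P s) P).

Definition loc_max_distant (s : seq pt) (Q Qbar : pt) (delta : R) : Prop :=
  forall A : pt, enorm (psub A Qbar) < delta -> in_interior_conv_hull s A ->
    enorm A < enorm Q.

End Plane.

(* Main.v *)
Require Import Defs.
From mathcomp Require Import all_boot all_order all_algebra.
From mathcomp Require Import reals.
From mathcomp Require Import ring lra.
Import Order.TTheory GRing.Theory Num.Theory.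
Local Open Scope ring_scope.

Section Aux.
Variable R : realType.
Implicit Types p q : pt R.

Lemma dot_ge0 p : 0 <= dot p p.
Proof. rewrite /dot; nra. Qed.

Lemma enorm_ge0 p : 0 <= enorm p.
Proof. exact: sqrtr_ge0. Qed.

Lemma enorm_sq p : enorm p ^+ 2 = dot p p.
Proof. by rewrite /enorm sqr_sqrtr // dot_ge0. Qed.

Lemma cs p q : dot p q <= enorm p * enorm q.
Proof.
have h1 : (enorm p * enorm q) ^+ 2 = dot p p * dot q q by rewrite exprMn !enorm_sq.
have h2 : dot p q ^+ 2 <= dot p p * dot q q.
  rewrite -subr_ge0.
  have -> : dot p p * dot q q - dot p q ^+ 2 = (p.1 * q.2 - p.2 * q.1) ^+ 2.
    by rewrite /dot; ring.
  exact: sqr_ge0.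
have h3 : 0 <= enorm p * enorm q by rewrite mulr_ge0 // enorm_ge0.
rewrite -h1 in h2; nra.
Qed.

Lemma enorm_eq0 p : enorm p = 0 -> p = (0, 0).
Proof.
move=> h; have : dot p p = 0 by rewrite -enorm_sq h expr0n.
case: p {h} => a b; rewrite /dot /= => h.
have ha : a = 0 by nra.
have hb : b = 0 by nra.
by rewrite ha hb.
Qed.

Lemma enorm_lt p e : 0 < e -> dot p p < e ^+ 2 -> enorm p < e.
Proof.
move=> e0 h; have := enorm_sq p; have := enorm_ge0 p; nra.
Qed.

Lemma enorm_tri p q : enorm (psub p q) <= enorm p + enorm q.
Proof.
have h := cs p q.
have h1 : enorm (psub p q) ^+ 2 <= (enorm p + enorm q) ^+ 2.
  rewrite enorm_sq sqrrD !enorm_sq.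
  have : dot (psub p q) (psub p q) = dot p p - 2 * dot p q + dot q q.
    by rewrite /dot /psub /=; ring.
  move=> ->.
  have h' := cs p (-q.1, -q.2).
  have e1 : dot p (- q.1, - q.2) = - dot p q by rewrite /dot /=; ring.
  have e2 : enorm (- q.1, - q.2) = enorm q by rewrite /enorm /dot /=; congr Num.sqrt; ring.
  rewrite e1 e2 in h'. nra.
have := enorm_ge0 (psub p q); have := enorm_ge0 p; have := enorm_ge0 q. nra.
Qed.

Lemma enorm_sym p q : enorm (psub p q) = enorm (psub q p).
Proof. by rewrite /enorm /dot /psub /=; congr Num.sqrt; ring. Qed.

Lemma hull_dot (s : seq (pt R)) (Q A u : pt R) (w : nat -> R) :
  \sum_(i < size s) w i = 1 ->
  A.1 = \sum_(i < size s) w i * (nth A s i).1 ->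
  A.2 = \sum_(i < size s) w i * (nth A s i).2 ->
  dot u (psub Q A) = \sum_(i < size s) w i * dot u (psub Q (nth A s i)).
Proof.
move=> hw h1 h2.
rewrite (eq_bigr (fun i : 'I_(size s) => (u.1 * Q.1 + u.2 * Q.2) * w i
   - u.1 * (w i * (nth A s i).1) - u.2 * (w i * (nth A s i).2))); last first.
  by move=> i _; rewrite /dot /psub /=; ring.
rewrite !sumrB -!mulr_sumr hw -h1 -h2 /dot /psub /=; ring.
Qed.

End Aux.

Theorem lemma5p12 (R : realType) (s : seq (pt R)) (Q Qbar : pt R) (delta r : R) :
  convex_polygon s -> Q \in s ->
  0 < delta -> enorm (psub Q Qbar) < delta ->
  0 < r -> r < enorm Q ->
  (forall P, P \in s -> P != Q ->
     delta / r <= dot Q (psub Q P) / (enorm Q * enorm (psub Q P))) ->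
  loc_max_distant s Q Qbar delta.
Proof.
move=> _ _ del0 hQb r0 rQ hP.
set k := delta / r.
have kr : k * r = delta by rewrite /k mulfVK // gt_eqF.
have k0 : 0 < k by rewrite /k divr_gt0.
set c := k * enorm Q.
have cd : delta < c by rewrite /c -kr ltr_pM2l.
have Q0 : 0 < enorm Q by apply: lt_trans rQ.
have hPc : forall P, P \in s -> c * enorm (psub Q P) <= dot Q (psub Q P).
  move=> P Ps; have [->|PQ] := eqVneq P Q.
    have -> : psub Q Q = (0, 0) by rewrite /psub !subrr.
    by rewrite /dot /= !mulr0 addr0 -[enorm _]/(Num.sqrt _) /dot /= !mulr0 addr0 sqrtr0 mulr0.
  have hn : 0 < enorm (psub Q P).
    rewrite lt_def enorm_ge0 andbT; apply/eqP => /enorm_eq0 h.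
    move: PQ; case: P {Ps} h => a b; case: Q {hQb rQ hP c cd Q0} => x y.
    rewrite /psub /= => -[/eqP]; rewrite subr_eq0 => /eqP -> /eqP; rewrite subr_eq0 => /eqP ->.
    by rewrite eqxx.
  have := hP P Ps PQ; rewrite ler_pdivlMr ?mulr_gt0 //.
  by rewrite /c mulrA.
have hull : forall y, in_conv_hull s y -> exists S, [/\ 0 <= S,
   c * S <= dot Q (psub Q y) &
   enorm (psub Q y) ^+ 2 <= enorm (psub Q y) * S].
  move=> y [w [w0 [w1 [h1 h2]]]].
  exists (\sum_(i < size s) w i * enorm (psub Q (nth y s i))); split.
  - by apply: sumr_ge0 => i _; rewrite mulr_ge0 ?w0 ?enorm_ge0.
  - rewrite (@hull_dot R s Q y Q w w1 h1 h2) mulr_sumr; apply: ler_sum => i _.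
    rewrite mulrCA; apply: ler_wpM2l; first exact: w0.
    by apply: hPc; rewrite mem_nth.
  - rewrite enorm_sq (@hull_dot R s Q y (psub Q y) w w1 h1 h2) mulr_sumr; apply: ler_sum => i _.
    rewrite mulrCA; apply: ler_wpM2l; first exact: w0.
    exact: cs.
move=> A hAd [e [e0 hint]].
have [S [S0 hS1 hS2]] : exists S, [/\ 0 <= S,
   c * S <= dot Q (psub Q A) &
   enorm (psub Q A) ^+ 2 <= enorm (psub Q A) * S].
  apply: hull; apply: hint.
  have -> : psub A A = (0, 0) by rewrite /psub !subrr.
  by rewrite /enorm /dot /= !mulr0 addr0 sqrtr0.
have DQ : 0 < dot Q Q by rewrite -enorm_sq exprn_gt0.
have eA : dot Q Q - dot A A = 2 * dot Q (psub Q A) - enorm (psub Q A) ^+ 2.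
  by rewrite enorm_sq /dot /psub /=; ring.
rewrite /enorm ltr_sqrt // -subr_gt0 eA.
have [d0|dpos] := eqVneq (enorm (psub Q A)) 0.
  exfalso; have QA : A = Q.
    move: (@enorm_eq0 R _ d0); case: A {hAd hint hS1 hS2 eA d0} => a b.
    rewrite /psub /= => -[/eqP]; rewrite subr_eq0 => /eqP <- /eqP; rewrite subr_eq0 => /eqP <-.
    by case: Q {hQb rQ hP hPc hull c cd Q0 DQ}.
  subst A.
  set t := e / (2 * enorm Q).
  have t0 : 0 < t by rewrite /t divr_gt0 // mulr_gt0.
  set y : pt R := (Q.1 + t * Q.1, Q.2 + t * Q.2).
  have hy : enorm (psub y Q) < e.
  apply: enorm_lt => //.
  have -> : dot (psub y Q) (psub y Q) = t ^+ 2 * enorm Q ^+ 2.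
    by rewrite enorm_sq /dot /psub /=; ring.
  rewrite /t expr_div_n exprMn.
  have -> : e ^+ 2 / (2 ^+ 2 * enorm Q ^+ 2) * enorm Q ^+ 2 = e ^+ 2 / 4.
    by field; rewrite gt_eqF.
  nra.
  have [S' [S'0 hS'1 _]] := hull y (hint y hy).
  have : dot Q (psub Q y) = - t * dot Q Q by rewrite /dot /psub /=; ring.
  move=> ey; rewrite ey in hS'1.
  have : 0 <= c * S' by rewrite mulr_ge0 // (le_trans (ltW del0)) // ltW.
  nra.
have dgt : 0 < enorm (psub Q A) by rewrite lt_def dpos enorm_ge0.
have dS : enorm (psub Q A) <= S.
  by rewrite -(ler_pM2l dgt) -expr2.
have d2 : enorm (psub Q A) < 2 * delta.
  have -> : psub Q A = psub (psub Q Qbar) (psub A Qbar) by rewrite /psub /=; congr pair; ring.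
  apply: (le_lt_trans (@enorm_tri R _ _)); lra.
nra.
Qed.
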